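(* Let $\mathbf{G}$ be a positively weighted graph, let $s,t$ be vertices, and let $F\subseteq E(T_{\mathbf{G}}(s))$ be a set of edges such that the subtrees $T_{\mathbf{G}}(s,e)$ for distinct $e\in F$ are pairwise disjoint. Let $S=\bigcup_{e\in F}V(T_{\mathbf{G}}(s,e))$. If $t\in S$, then there is an edge $\{x,y\}\in E_{\mathbf{G}}(V(\mathbf{G})\setminus S,\,S)$ with $\{x,y\}\notin F$ such that $$\pi_{\mathbf{G}\setminus F}(s,t)=\pi_{\mathbf{G}}(s,x)\circ\{x,y\}\circ\pi_{\mathbf{G}\setminus F}(y,t),$$ and moreover for such $x,y$ the path $\pi_{\mathbf{G}\setminus F}(y,t)$ contains only vertices of $S$.
   Context: For every graph $\mathbf{H}$ under consideration (including subgraphs $\mathbf{G}\setminus F$ obtained by deleting edge sets $F$) and every pair of nodes $x,y$, a canonical shortest path $\pi_{\mathbf{H}}(x,y)$ is fixed; canonical paths are closed under subpaths (if $z\in\pi_{\mathbf{H}}(x,y)$ then $\pi_{\mathbf{H}}(x,y)=\pi_{\mathbf{H}}(x,z)\circ\pi_{\mathbf{H}}(z,y)$) and consistent with edge removals (if $e\notin\pi_{\mathbf{H}}(x,y)$ then $\pi_{\mathbf{H}\setminus e}(x,y)=\pi_{\mathbf{H}}(x,y)$). $\circ$ denotes concatenation. $T_{\mathbf{G}}(s)$ is the shortest path tree of $s$ consistent with the canonical paths; for an edge $e$ of it, $T_{\mathbf{G}}(s,e)$ is the subtree of $T_{\mathbf{G}}(s)$ below $e$. $E_{\mathbf{G}}(A,B)=E(\mathbf{G})\cap(A\times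 B)$. *)

(* Defs.v *)
From HB Require Import structures.
From mathcomp Require Import all_boot all_order all_algebra.
Set Implicit Arguments. Unset Strict Implicit. Unset Printing Implicit Defensive.
Import Order.TTheory GRing.Theory Num.Theory.
Local Open Scope ring_scope.

(* Graphs: vertex set = a finType V; an (undirected) graph is given by its
   edge set H : {set {set V}} (edges are 2-element sets of vertices).
   Subgraphs G \ F are edge sets E :\: F. *)

Section Graphs.
Variables (V : finType) (R : realDomainType).

Definition path_edges (p : seq V) : seq {set V} :=
  if p is a :: q then pairmap (fun u v => [set u; v]) a q else [::].

Definition is_walk (H : {set {set V}}) (x y : V) (p : seq V) : bool :=
  if p is a :: q then [&& a == x, last a q == y & all (mem H) (path_edges p)]
  else false.

Definition path_len (w : {set V} -> R) (p : seq V) : R :=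
  \sum_(e <- path_edges p) w e.

Definition is_shortest (w : {set V} -> R) (H : {set {set V}}) (x y : V)
  (p : seq V) : Prop :=
  is_walk H x y p /\ forall p', is_walk H x y p' -> path_len w p <= path_len w p'.

(* pi H x y : the canonical shortest path in the subgraph with edge set H
   (None if y is unreachable from x in H). The axioms are required for every
   subgraph H of G (edge set E). *)
Definition canonical_paths (E : {set {set V}}) (w : {set V} -> R)
  (pi : {set {set V}} -> V -> V -> option (seq V)) : Prop :=
  forall H : {set {set V}}, H \subset E ->
  [/\ (forall x y p, pi H x y = Some p -> is_shortest w H x y p),
      (forall x y, pi H x y = None -> forall p, ~~ is_walk H x y p),
      (forall x y z p, pi H x y = Some p -> z \in p ->
         exists p1 p2, [/\ pi H x z = Some p1, pi H z y = Some p2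
                         & p = p1 ++ behead p2])
    &
      (forall x y e, e \in H ->
         (forall p, pi H x y = Some p -> e \notin path_edges p) ->
         pi (H :\ e) x y = pi H x y)].

(* e is an edge of the shortest path tree T_G(s) *)
Definition in_spt (E : {set {set V}}) (pi : {set {set V}} -> V -> V -> option (seq V))
  (s : V) (e : {set V}) : Prop :=
  exists v p, pi E s v = Some p /\ e \in path_edges p.

(* V(T_G(s,e)): vertices below the tree edge e, i.e. those whose tree path
   from s goes through e *)
Definition subtreeV (E : {set {set V}}) (pi : {set {set V}} -> V -> V -> option (seq V))
  (s : V) (e : {set V}) : {set V} :=
  [set v | if pi E s v is Some p then e \in path_edges p else false].

End Graphs.

(* Main.v *)
Require Import Defs.
From HB Require Import structures.
From mathcomp Require Import all_boot all_order all_algebra.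
Import Order.TTheory GRing.Theory Num.Theory.
Local Open Scope ring_scope.

Section H.
Variables (V : finType) (R : realDomainType).
Implicit Types (p u c : seq V) (H : {set {set V}}).

Lemma pe_cat (u v : seq V) z :
  path_edges (rcons u z ++ v) = path_edges (rcons u z) ++ path_edges (z :: v).
Proof. by case: u => [|a u] //=; rewrite pairmap_cat last_rcons. Qed.

Lemma walk_head H x y p : is_walk H x y p -> exists c, p = x :: c.
Proof. by case: p => //= a q /and3P [/eqP -> _ _]; exists q. Qed.

Lemma walk_last H x y p : is_walk H x y p -> exists u, p = rcons u y.
Proof.
case/lastP: p => [|u v] //; case: u => [|a u] /=.
  by case/and3P => _ /eqP <- _; exists [::].
by rewrite last_rcons => /and3P [_ /eqP <- _]; exists (a :: u).
Qed.

Lemma walk_sub H H' x y p : is_walk H x y p -> H \subset H' -> is_walk H' x y p.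
Proof.
case: p => //= a q /and3P [-> -> al] sub; apply/allP => e /(allP al).
exact: (subsetP sub).
Qed.

Lemma notuniq_split {l : seq V} : ~~ uniq l ->
  exists a z b c, l = a ++ z :: b ++ z :: c.
Proof.
elim: l => [|x l IH] //=; rewrite negb_and negbK; case/orP.
  by case/splitPr => b c; exists [::], x, b, c.
by move/IH => [a [z [b [c ->]]]]; exists (x :: a), z, b, c.
Qed.

Lemma split_first (P : pred V) (l : seq V) : has P l ->
  exists l1 y r, [/\ l = l1 ++ y :: r, all (predC P) l1 & P y].
Proof.
elim: l => [|x l IH] //=; case Px: (P x) => /=.
  by move=> _; exists [::], x, l.
by move/IH => [l1 [y [r [-> a Py]]]]; exists (x :: l1), y, r; rewrite /= Px.
Qed.

Lemma prefix_uniq u u' z c c' : uniq (rcons u z ++ c) ->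
  rcons u z ++ c = rcons u' z ++ c' -> u = u' /\ c = c'.
Proof.
move=> un e; move: (un); rewrite e => un'.
rewrite !cat_rcons in e un un'.
have zu : z \notin u.
  by move: un; rewrite cat_uniq => /and3P [_ /hasPn hH _]; apply: hH; rewrite inE eqxx.
have zu' : z \notin u'.
  by move: un'; rewrite cat_uniq => /and3P [_ /hasPn hH _]; apply: hH; rewrite inE eqxx.
have hs : size u = size u'.
  have := congr1 (index z) e; rewrite !index_cat (negbTE zu) (negbTE zu') /= eqxx.
  by rewrite !addn0.
by move/eqP: e; rewrite eqseq_cat // => /andP [/eqP -> /eqP [->]].
Qed.

Lemma sum_ge0 (E : {set {set V}}) (w : {set V} -> R) (l : seq {set V}) :
  (forall e, e \in E -> 0 < w e) -> all (mem E) l -> 0 <= \sum_(e <- l) w e.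
Proof.
move=> wp; elim: l => [|x l IH] /=; first by rewrite big_nil.
by case/andP => xE al; rewrite big_cons addr_ge0 ?IH // ltW // wp.
Qed.
Arguments sum_ge0 {E w l}.

Lemma sum_gt0 (E : {set {set V}}) (w : {set V} -> R) (l : seq {set V}) :
  (forall e, e \in E -> 0 < w e) -> all (mem E) l -> l != [::] ->
  0 < \sum_(e <- l) w e.
Proof.
move=> wp; case: l => [|x l] //= /andP [xE al] _.
by rewrite big_cons ltr_pwDl ?wp // (sum_ge0 wp).
Qed.
Arguments sum_gt0 {E w l}.

Lemma shortest_uniq (E H : {set {set V}}) (w : {set V} -> R) x y p :
  (forall e, e \in E -> 0 < w e) -> H \subset E -> is_shortest w H x y p -> uniq p.
Proof.
move=> wp sub [wk mn]; apply/negPn/negP => nu.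
have [a [z [b [c ep]]]] := notuniq_split nu.
have ep2 : p = rcons a z ++ (b ++ z :: c) by rewrite ep cat_rcons.
have ecyc : z :: b ++ z :: c = rcons (z :: b) z ++ c by rewrite cat_rcons.
have pep : path_edges p = path_edges (rcons a z) ++
    (path_edges (rcons (z :: b) z) ++ path_edges (z :: c)).
  by rewrite ep2 pe_cat ecyc pe_cat.
have pep' : path_edges (rcons a z ++ c) = path_edges (rcons a z) ++ path_edges (z :: c).
  by rewrite pe_cat.
have wk' : is_walk H x y (rcons a z ++ c).
  move: wk; rewrite ep2; case: a {ep ep2 pep pep'} => [|a0 a] /=.
    rewrite last_cat /= => /and3P [-> -> al]; rewrite /=.
    move: al; rewrite -[pairmap _ z (b ++ z :: c)]/(path_edges (z :: b ++ z :: c)) ecyc.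
    by rewrite pe_cat all_cat => /andP [_ ->].
  rewrite !last_cat !last_rcons /= => /and3P [-> -> al].
  rewrite /=; move: al.
  have -> : pairmap (fun i j => [set i; j]) a0 (rcons a z ++ (b ++ z :: c)) =
    path_edges (rcons (a0 :: a) z ++ (b ++ z :: c)) by [].
  have -> : pairmap (fun i j => [set i; j]) a0 (rcons a z ++ c) =
    path_edges (rcons (a0 :: a) z ++ c) by [].
  by rewrite !pe_cat ecyc pe_cat !all_cat => /and3P [-> _ ->].
have := mn _ wk'; rewrite /path_len pep pep' !big_cat /=.
have alE : all (mem E) (path_edges p).
  case: (p) wk => //= a0 q /and3P [_ _ al]; apply/allP => e /(allP al).
  exact: (subsetP sub).
move: alE; rewrite pep !all_cat => /and3P [h1 h2 h3].
have := sum_gt0 wp h2; rewrite /= => /(_ ltac:(by case: (b))) pos.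
rewrite lerD2l => le; have := lt_le_trans (ltr_pwDl pos (lexx _)) le; by rewrite ltxx.
Qed.

End H.
Arguments sum_gt0 {V R E w l}.
Arguments sum_ge0 {V R E w l}.
Arguments pe_cat {V}.
Arguments walk_head {V H x y p}.
Arguments walk_last {V H x y p}.
Arguments walk_sub {V H H' x y p}.
Arguments notuniq_split {V l}.
Arguments split_first {V P l}.
Arguments prefix_uniq {V u u' z c c'}.
Arguments shortest_uniq {V R E H w x y p}.

Theorem proposition6 (V : finType) (R : realDomainType)
  (E : {set {set V}}) (w : {set V} -> R)
  (pi : {set {set V}} -> V -> V -> option (seq V))
  (s t : V) (F : {set {set V}}) :
  (forall e, e \in E -> #|e| = 2%N) ->
  (forall e, e \in E -> 0 < w e) ->
  canonical_paths E w pi ->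
  (forall e, e \in F -> in_spt E pi s e) ->
  (forall e1 e2, e1 \in F -> e2 \in F -> e1 != e2 ->
     [disjoint subtreeV E pi s e1 & subtreeV E pi s e2]) ->
  let S := \bigcup_(e in F) subtreeV E pi s e in
  t \in S ->
  (exists p, is_walk (E :\: F) s t p) ->
  (exists x y px q,
     [/\ [set x; y] \in E, x \notin S, y \in S & [set x; y] \notin F] /\
     [/\ pi E s x = Some px, pi (E :\: F) y t = Some q
        & pi (E :\: F) s t = Some (px ++ q)]) /\
  (forall x y px q,
     [set x; y] \in E -> x \notin S -> y \in S -> [set x; y] \notin F ->
     pi E s x = Some px -> pi (E :\: F) y t = Some q ->
     pi (E :\: F) s t = Some (px ++ q) ->
     all (mem S) q).
Proof.
move=> _ wpos cp _ _ S tS [p0 wp0].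
set H0 := E :\: F.
have subH0 : H0 \subset E := subsetDl E F.
have [sh0 none0 sub0 _] := cp H0 subH0.
have [shE noneE subE _] := cp E (subxx E).
have sS : s \notin S.
  apply/bigcupP => -[e eF]; rewrite inE; case ep: (pi E s s) => [p|] //.
  have [wk mn] := shE _ _ _ ep.
  have := mn [:: s]; rewrite /is_walk /= eqxx /path_len big_nil => /(_ isT) le.
  move=> ein; have : 0 < path_len w p.
    rewrite /path_len; apply: (sum_gt0 wpos); last by case: (path_edges p) ein.
    case: (p) wk => //= a q /and3P [_ _ al]; exact: al.
  by move=> pos; have := lt_le_trans pos le; rewrite ltxx.
have noF : forall v pv, pi E s v = Some pv -> v \notin S -> pi H0 s v = Some pv.
  move=> v pv ev vS.
  have noe : forall e, e \in F -> e \notin path_edges pv.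
    move=> e eF; apply/negP => ein; move/negP: vS; apply; apply/bigcupP; exists e => //.
    by rewrite inE ev.
  suff: forall l : seq {set V}, {subset l <= F} -> pi (E :\: [set e in l]) s v = Some pv.
    move/(_ (enum F)); rewrite /H0.
    have -> : [set e in enum F] = F by apply/setP => e; rewrite inE mem_enum.
    by apply => e; rewrite mem_enum.
  elim=> [|e l IH] lF.
    have -> : E :\: [set e in [::]] = E by apply/setP => e; rewrite !inE.
    exact: ev.
  have eq : E :\: [set x in e :: l] = (E :\: [set x in l]) :\ e.
    by apply/setP => u; rewrite !inE negb_or andbA.
  have IH' : pi (E :\: [set x in l]) s v = Some pv by apply: IH => x xl; apply: lF; rewrite inE xl orbT.
  rewrite eq; case eE: (e \in E :\: [set x in l]).
    have [_ _ _ remK] := cp (E :\: [set x in l]) (subsetDl _ _).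
    rewrite remK // IH' // => p' [<-]; apply: noe; apply: lF; exact: mem_head.
  have -> : (E :\: [set x in l]) :\ e = E :\: [set x in l].
    by apply/setP => u; rewrite in_setD1; case: eqP => [->|_] //=; rewrite eE.
  exact: IH'.
have Esome : forall v pv, pi H0 s v = Some pv -> exists pE, pi E s v = Some pE.
  move=> v pv ev; case e: (pi E s v) => [pE|]; first by exists pE.
  have [wk _] := sh0 _ _ _ ev.
  by have := noneE _ _ e pv; rewrite (walk_sub wk subH0).
have huniq : forall (H : {set {set V}}) x y q, H \subset E -> pi H x y = Some q -> uniq q.
  move=> H x y q sH eq; have [shH _ _ _] := cp H sH.
  exact: (shortest_uniq wpos sH (shH _ _ _ eq)).
split.
  have [p ep] : exists p, pi H0 s t = Some p.
    case e: (pi H0 s t) => [p|]; first by exists p.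
    by have := none0 _ _ e p0; rewrite wp0.
  have [wp _] := sh0 _ _ _ ep.
  have up := huniq _ _ _ _ subH0 ep.
  have hasS : has (mem S) p.
    have [u pu] := walk_last wp; apply/hasP; exists t => //.
    by rewrite pu mem_rcons mem_head.
  have [l [y [r [pe lS yS]]]] := split_first hasS.
  case/lastP: l pe lS => [|l' x] pe lS.
    have [c pc] := walk_head wp; move: pc; rewrite pe /= => -[ys _].
    by move: yS sS; rewrite ys /= => ->.
  have yp : y \in p by rewrite pe mem_cat mem_head orbT.
  have [p1 [p2 [e1 e2 pcat]]] := sub0 _ _ _ _ ep yp.
  have [u pu] := walk_last (proj1 (sh0 _ _ _ e1)).
  have [c pc] := walk_head (proj1 (sh0 _ _ _ e2)).
  have [eu ec] : u = rcons l' x /\ c = r.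
    have pe2 : p = rcons u y ++ c by rewrite pcat pu pc.
    apply: (@prefix_uniq V u _ y c r); first by rewrite -pe2.
    by rewrite -pe2 pe !cat_rcons.
  have xp1 : x \in p1 by rewrite pu eu mem_rcons inE mem_rcons mem_head orbT.
  have [p3 [p4 [e3 e4 pcat2]]] := sub0 _ _ _ _ e1 xp1.
  have [u3 pu3] := walk_last (proj1 (sh0 _ _ _ e3)).
  have [c4 pc4] := walk_head (proj1 (sh0 _ _ _ e4)).
  have up1 := huniq _ _ _ _ subH0 e1.
  have [eu3 _] : u3 = l' /\ c4 = [:: y].
    have pe2 : p1 = rcons u3 x ++ c4 by rewrite pcat2 pu3 pc4.
    apply: (@prefix_uniq V u3 _ x c4 [:: y]); first by rewrite -pe2.
    by rewrite -pe2 pu eu -cats1.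
  have xS : x \notin S by move: lS; rewrite all_rcons => /andP [].
  have [px epx] := Esome _ _ e3.
  have epx' := noF _ _ epx xS.
  move: epx'; rewrite e3 pu3 eu3 => -[epx2].
  exists x, y, px, (y :: r).
  have xyH : [set x; y] \in H0.
    have := wp; case: (p) pe => //= a q pe' /and3P [_ _ al].
    move: al; rewrite -[pairmap _ a q]/(path_edges (a :: q)) pe' pe_cat /= all_cat.
    by case/andP => _ /andP [].
  move: (xyH); rewrite inE => /andP [xyF xyE].
  split; first by [].
  split => //; first by rewrite e2 pc ec.
  by rewrite ep pe epx2.
move=> x y px q xyE xS yS xyF epx eq ep.
have [wp _] := sh0 _ _ _ ep.
have up := huniq _ _ _ _ subH0 ep.
have [r qr] := walk_head (proj1 (sh0 _ _ _ eq)).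
apply/allP => z zq; apply/negPn/negP => zS.
have zp : z \in px ++ q by rewrite mem_cat zq orbT.
have [p1 [p2 [e1 e2 pcat]]] := sub0 _ _ _ _ ep zp.
have [u pu] := walk_last (proj1 (sh0 _ _ _ e1)).
have [c pc] := walk_head (proj1 (sh0 _ _ _ e2)).
have [pz epz] := Esome _ _ e1.
have := noF _ _ epz zS; rewrite e1 => -[epz1].
have zr : z \in r.
  move: zq; rewrite qr inE => /orP [/eqP zy|//].
  by move/negP: zS; rewrite zy => /(_ yS).
case/splitPr: zr qr => r1 r2 qr.
have [eu _] : u = px ++ y :: r1 /\ c = r2.
  have pe2 : px ++ q = rcons u z ++ c by rewrite pcat pu pc.
  apply: (@prefix_uniq V u _ z c r2); first by rewrite -pe2.
  by rewrite -pe2 qr cat_rcons -catA.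
have yz : y \in pz by rewrite -epz1 pu eu mem_rcons in_cons mem_cat mem_head !orbT.
have [a [b [ea eb pzcat]]] := subE _ _ _ _ epz yz.
have [a' pa] := walk_last (proj1 (shE _ _ _ ea)).
have [b' pb] := walk_head (proj1 (shE _ _ _ eb)).
move/bigcupP: yS => [e eF]; rewrite inE ea => ea'.
apply/negP: zS; rewrite negbK; apply/bigcupP; exists e => //.
rewrite inE epz pzcat pa pb /= pe_cat mem_cat.
by rewrite -pa ea'.
Qed.
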